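(* Assume $\mathbf a,\mathbf b\in\Delta^n$ with strictly positive entries, let $\kappa=1/\min\{a_{min},b_{min}\}$ and $M=\log(2)\|C\|_\infty^2(n+3\kappa)^2+2n\|C\|_\infty^2$. Then $$0\le\mathrm{OT}(\mathbf a,\mathbf b)-\mathbf{UOT}_{\mathbf{KL}}(\mathbf a,\mathbf b)\le\frac{M}{\tau},$$ where $\mathrm{OT}(\mathbf a,\mathbf b)=\min_{X\in\Pi(\mathbf a,\mathbf b)}\langle C,X\rangle$ and $\mathbf{UOT}_{\mathbf{KL}}(\mathbf a,\mathbf b)=\min_{X\in\mathbb{R}^{n\times n}_+}\big\{\langle C,X\rangle+\tau\mathbf{KL}(X\mathbf 1_n\|\mathbf a)+\tau\mathbf{KL}(X^\top\mathbf 1_n\|\mathbf b)\big\}$.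
   Context: Let $n\ge1$, $C\in\mathbb{R}^{n\times n}$ with nonnegative entries and $\|C\|_\infty=\max_{i,j}|C_{ij}|$; $\tau>0$; $\Delta^n=\{\mathbf x\in\mathbb{R}^n_+:\sum_i x_i=1\}$; $a_{min}=\min_i a_i$, $b_{min}=\min_i b_i$; $\Pi(\mathbf a,\mathbf b)=\{X\in\mathbb{R}^{n\times n}_+:X\mathbf 1_n=\mathbf a,\ X^\top\mathbf 1_n=\mathbf b\}$. For $\mathbf x\in\mathbb{R}^n_+$ and $\mathbf y$ with positive entries, $\mathbf{KL}(\mathbf x\|\mathbf y)=\sum_i x_i\log(x_i/y_i)-x_i+y_i$ (with $0\log0=0$). $\mathbf 1_n$ is the all-ones vector. *)

(* Defs.v *)
From HB Require Import structures.
From mathcomp Require Import all_boot all_order all_algebra.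
From mathcomp Require Import all_classical all_reals all_analysis.
Set Implicit Arguments. Unset Strict Implicit. Unset Printing Implicit Defensive.
Import Order.TTheory GRing.Theory Num.Theory.
Local Open Scope classical_set_scope.
Local Open Scope ring_scope.

Section Defs.
Variable R : realType.

Definition in_simplex (n : nat) (x : 'I_n -> R) : Prop :=
  (forall i, 0 <= x i) /\ \sum_(i < n) x i = 1.

(* minimum entry of a vector (n >= 1): the infimum of its finite range *)
Definition vmin (n : nat) (x : 'I_n -> R) : R := inf (range x).

Definition mx_sup_norm (n : nat) (C : 'M[R]_n) : R :=
  \big[Num.max/0]_(i < n) \big[Num.max/0]_(j < n) `|C i j|.

Definition mx_nonneg (n : nat) (X : 'M[R]_n) : Prop := forall i j, 0 <= X i j.

Definition frob (n : nat) (C X : 'M[R]_n) : R :=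
  \sum_(i < n) \sum_(j < n) C i j * X i j.

Definition rowsum (n : nat) (X : 'M[R]_n) : 'I_n -> R := fun i => \sum_(j < n) X i j.
Definition colsum (n : nat) (X : 'M[R]_n) : 'I_n -> R := fun j => \sum_(i < n) X i j.

Definition transport_polytope (n : nat) (a b : 'I_n -> R) : set 'M[R]_n :=
  [set X | mx_nonneg X /\ rowsum X = a /\ colsum X = b].

Definition KL (n : nat) (x y : 'I_n -> R) : R :=
  \sum_(i < n) ((if x i == 0 then 0 else x i * ln (x i / y i)) - x i + y i).

Definition OT (n : nat) (C : 'M[R]_n) (a b : 'I_n -> R) : R :=
  inf [set frob C X | X in transport_polytope a b].

Definition UOT_KL (n : nat) (C : 'M[R]_n) (tau : R) (a b : 'I_n -> R) : R :=
  inf [set frob C X + tau * KL (rowsum X) a + tau * KL (colsum X) b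
      | X in [set Y : 'M[R]_n | mx_nonneg Y]].

End Defs.

(* Main.v *)
Require Import Defs.
From HB Require Import structures.
From mathcomp Require Import all_boot all_order all_algebra.
From mathcomp Require Import all_classical all_reals all_analysis.
From mathcomp Require Import ring lra.
Import Order.TTheory GRing.Theory Num.Theory.
Local Open Scope classical_set_scope.
Local Open Scope ring_scope.

Section Aux.
Variable R : realType.

Definition gk (t y : R) := (if t == 0 then 0 else t * ln (t / y)) - t + y.

Lemma ln_le_sub1 (u : R) : 0 < u -> ln u <= u - 1.
Proof.
move=> u0; have := expR_ge1Dx (ln u); rewrite lnK ?posrE //; lra.
Qed.

Lemma hell {t y : R} : 0 <= t -> 0 < y ->
  (Num.sqrt t - Num.sqrt y) ^+ 2 <= gk t y.
Proof.
move=> t0 y0; rewrite /gk.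
have [->|tn0] := eqVneq t 0.
  by rewrite sqrtr0 sub0r sqrrN sqr_sqrtr ?(ltW y0) // subr0 add0r.
have tp : 0 < t by rewrite lt_def tn0.
set s := Num.sqrt t; set v := Num.sqrt y.
have sp : 0 < s by rewrite sqrtr_gt0.
have vp : 0 < v by rewrite sqrtr_gt0.
have ts : t = s ^+ 2 by rewrite sqr_sqrtr // ltW.
have yv : y = v ^+ 2 by rewrite sqr_sqrtr // ltW.
have e1 : t / y = ((v / s)^-1) ^+ 2 by rewrite ts yv invf_div expr_div_n.
have hl : ln (t / y) = - ln (v / s) *+ 2.
  rewrite e1 lnXn ?invr_gt0 ?divr_gt0 // lnV ?posrE ?divr_gt0 //.
have hk := @ln_le_sub1 (v / s) (divr_gt0 vp sp).
have : t * ln (t / y) >= t * (2 * (1 - v / s)).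
  rewrite ler_pM2l // hl mulr2n; lra.
have -> : t * (2 * (1 - v / s)) = 2 * s^+2 - 2 * s * v.
  by rewrite ts; field; rewrite gt_eqF.
rewrite ts yv; lra.
Qed.


Lemma coord (L tau t y : R) : 0 <= L -> 0 < tau -> 2 * L <= tau -> 0 <= t -> 0 < y -> y <= 1 ->
  L * `|t - y| <= tau * gk t y + 2 * (L ^+ 2 / tau).
Proof.
move=> L0 tau0 Lt t0 y0 y1.
have hg := hell t0 y0.
set s := Num.sqrt t in hg *; set v := Num.sqrt y in hg *.
have s0 : 0 <= s by rewrite sqrtr_ge0.
have v0 : 0 <= v by rewrite sqrtr_ge0.
have ts : t = s ^+ 2 by rewrite sqr_sqrtr.
have yv : y = v ^+ 2 by rewrite sqr_sqrtr // ltW.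
have v1 : v <= 1 by rewrite -sqrtr1 ler_sqrt.
set w := s - v in hg.
set aw := `|w|.
have aw0 : 0 <= aw := normr_ge0 w.
have aw2 : aw ^+ 2 = w ^+ 2 by rewrite real_normK ?num_real.
have hw1 : w <= aw := ler_norm w.
have hw2 : - w <= aw by rewrite /aw -normrN ler_norm.
have hA : `|t - y| <= aw ^+ 2 + 2 * aw.
  have -> : t - y = w * (w + 2 * v) by rewrite ts yv /w; ring.
  rewrite normrM; apply: (@le_trans _ _ (aw * (aw + 2 * v))).
    rewrite /aw; apply: ler_wpM2l => //.
    by rewrite (le_trans (ler_normD _ _)) // normrM ger0_norm // ger0_norm.
  nra.
set q := L ^+ 2 / tau.
have hq : 2 * L * aw <= tau * aw ^+ 2 / 2 + 2 * q.
  rewrite -subr_ge0.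
  have -> : tau * aw ^+ 2 / 2 + 2 * q - 2 * L * aw = (tau * aw - 2 * L) ^+ 2 / (2 * tau).
    by rewrite /q; field; rewrite gt_eqF.
  by apply: divr_ge0; [exact: sqr_ge0 | apply: mulr_ge0 => //; exact: ltW].
have h1 : L * `|t - y| <= L * (aw ^+ 2 + 2 * aw) by apply: ler_wpM2l.
have h2 : tau * aw ^+ 2 <= tau * gk t y by apply: ler_wpM2l; [exact: ltW | rewrite aw2].
nra.
Qed.


Lemma kl_bound n (x y : 'I_n -> R) L tau : 0 <= L -> 0 < tau -> 2 * L <= tau ->
  (forall i, 0 <= x i) -> (forall i, 0 < y i) -> (forall i, y i <= 1) ->
  L * \sum_i `|x i - y i| <= tau * KL x y + n%:R * (2 * (L ^+ 2 / tau)).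
Proof.
move=> L0 t0 Lt x0 y0 y1.
have -> : n%:R * (2 * (L ^+ 2 / tau)) = \sum_(i < n) (2 * (L ^+ 2 / tau)).
  by rewrite sumr_const card_ord mulr_natl.
rewrite /KL !mulr_sumr -big_split /=.
apply: ler_sum => i _; exact: coord.
Qed.

Lemma KL_ge0 n (x y : 'I_n -> R) : (forall i, 0 <= x i) -> (forall i, 0 < y i) ->
  0 <= KL x y.
Proof.
move=> x0 y0; apply: sumr_ge0 => i _.
exact: le_trans (sqr_ge0 _) (hell (x0 i) (y0 i)).
Qed.

Lemma KL_self n (y : 'I_n -> R) : KL y y = 0.
Proof.
rewrite /KL big1 // => i _.
case: eqP => [->|yn0]; first by rewrite subrr addr0.
by rewrite divff ?ln1 ?mulr0 ?sub0r ?addNr //; apply/eqP.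
Qed.

Lemma simplex_le1 n (y : 'I_n -> R) : in_simplex y -> forall i, y i <= 1.
Proof.
move=> [y0 y1] i; rewrite -y1 (bigD1 i) //= lerDl.
by apply: sumr_ge0 => j _.
Qed.


Lemma scal {r a : R} : 0 <= r -> 0 <= a ->
  [/\ 0 <= Num.min 1 (a / r), Num.min 1 (a / r) <= 1,
      r * Num.min 1 (a / r) <= a, a - r * Num.min 1 (a / r) <= `|r - a|
    & r * (1 - Num.min 1 (a / r)) <= `|r - a|].
Proof.
move=> r0 a0.
have [->|rn0] := eqVneq r 0.
  rewrite invr0 mulr0 min_r // mul0r sub0r normrN ger0_norm // subr0 lexx.
  by rewrite mul0r; split => //; rewrite ler01.
have rp : 0 < r by rewrite lt_def rn0.
have [h1|h1] := leP 1 (a / r).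
  rewrite mulr1 subrr mulr0.
  have ra : r <= a by rewrite -(mulr1 r) -ler_pdivlMl // mulrC.
  split => //; by rewrite -normrN opprB ler_norm.
have e : r * (a / r) = a by rewrite mulrC divfK.
rewrite e subrr; split => //.
- by rewrite divr_ge0.
- exact: ltW.
- rewrite mulrBr mulr1 e; exact: ler_norm.
Qed.


Lemma sup_norm_ge n (C : 'M[R]_n) i j : `|C i j| <= mx_sup_norm C.
Proof.
rewrite /mx_sup_norm.
apply: le_trans (le_bigmax _ _ i).
exact: (le_bigmax _ (fun j => `|C i j|) j).
Qed.

Lemma sup_norm_ge0 n (C : 'M[R]_n) : 0 <= mx_sup_norm C.
Proof.
rewrite /mx_sup_norm; apply: (big_ind (fun x => 0 <= x)) => //.
  by move=> x y x0 y0; rewrite le_max x0.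
move=> i _; apply: (big_ind (fun x => 0 <= x)) => //.
by move=> x y x0 y0; rewrite le_max x0.
Qed.


Lemma round n (C X : 'M[R]_n) (a b : 'I_n -> R) :
  (forall i j, 0 <= C i j) -> mx_nonneg X -> in_simplex a -> in_simplex b ->
  exists Y, transport_polytope a b Y /\
    frob C Y <= frob C X + mx_sup_norm C *
      (\sum_i `|rowsum X i - a i| + \sum_j `|colsum X j - b j|).
Proof.
move=> C0 X0 [a0 a1] [b0 b1].
set r := rowsum X; set c := colsum X.
have r0 : forall i, 0 <= r i by move=> i; apply: sumr_ge0 => j _.
have c0 : forall j, 0 <= c j by move=> j; apply: sumr_ge0 => i _.
pose f i := Num.min 1 (a i / r i).
pose g j := Num.min 1 (b j / c j).
have f0 : forall i, 0 <= f i by move=> i; case: (scal (r0 i) (a0 i)).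
have f1 : forall i, f i <= 1 by move=> i; case: (scal (r0 i) (a0 i)).
have rf : forall i, r i * f i <= a i by move=> i; case: (scal (r0 i) (a0 i)).
have rf2 : forall i, a i - r i * f i <= `|r i - a i| by move=> i; case: (scal (r0 i) (a0 i)).
have g0 : forall j, 0 <= g j by move=> j; case: (scal (c0 j) (b0 j)).
have g1 : forall j, g j <= 1 by move=> j; case: (scal (c0 j) (b0 j)).
have cg : forall j, c j * g j <= b j by move=> j; case: (scal (c0 j) (b0 j)).
have cg2 : forall j, c j * (1 - g j) <= `|c j - b j| by move=> j; case: (scal (c0 j) (b0 j)).
pose Z := \matrix_(i, j) (X i j * Num.min (f i) (g j)).
have ZE : forall i j, Z i j = X i j * Num.min (f i) (g j) by move=> i j; rewrite mxE.
have Z0 : forall i j, 0 <= Z i j.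
  by move=> i j; rewrite ZE mulr_ge0 // le_min f0 g0.
have ZX : forall i j, Z i j <= X i j.
  by move=> i j; rewrite ZE ler_piMr // ge_min f1.
have Zf : forall i j, Z i j <= X i j * f i.
  by move=> i j; rewrite ZE ler_wpM2l // ge_min lexx.
have Zg : forall i j, Z i j <= X i j * g j.
  by move=> i j; rewrite ZE ler_wpM2l // ge_min lexx orbT.
have XZ : forall i j, X i j - Z i j <= X i j * (1 - f i) + X i j * (1 - g j).
  move=> i j; rewrite ZE -{1}(mulr1 (X i j)) -!mulrBr -mulrDr ler_wpM2l //.
  have := f1 i; have := g1 j; have [_|_] := leP (f i) (g j) => ? ?; lra.
pose e i := a i - rowsum Z i.
pose h j := b j - colsum Z j.
have ra : forall i, rowsum Z i <= r i * f i.
  move=> i; rewrite /r /rowsum mulr_suml; apply: ler_sum => j _; exact: Zf.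
have cb : forall j, colsum Z j <= c j * g j.
  move=> j; rewrite /c /colsum mulr_suml; apply: ler_sum => i _; exact: Zg.
have e0 : forall i, 0 <= e i by move=> i; rewrite subr_ge0 (le_trans (ra i)).
have h0 : forall j, 0 <= h j by move=> j; rewrite subr_ge0 (le_trans (cb j)).
pose D := \sum_i e i.
have Dh : \sum_j h j = D.
  rewrite /D /e /h !sumrB a1 b1; congr (_ - _).
  by rewrite /rowsum /colsum exchange_big.
have eD : forall i, e i * D / D = e i.
  move=> i; have [D0|Dn0] := eqVneq D 0; last by rewrite mulfK.
  have -> : e i = 0 by apply: (psumr_eq0P (fun j _ => e0 j) D0).
  by rewrite !mul0r.
have hD : forall j, h j * D / D = h j.
  move=> j; have [D0|Dn0] := eqVneq D 0; last by rewrite mulfK.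
  have Dh0 := Dh; rewrite D0 in Dh0.
  have -> : h j = 0 by apply: (psumr_eq0P (fun j _ => h0 j) Dh0).
  by rewrite !mul0r.
have D0 : 0 <= D by apply: sumr_ge0 => i _; exact: e0.
set L := mx_sup_norm C.
have L0 : 0 <= L := @sup_norm_ge0 n C.
have CL : forall i j, C i j <= L.
  by move=> i j; rewrite -(ger0_norm (C0 i j)) sup_norm_ge.
pose Y := \matrix_(i, j) (Z i j + e i * h j / D).
have YE : forall i j, Y i j = Z i j + e i * h j / D by move=> i j; rewrite mxE.
have eb : forall i, e i <= (a i - r i * f i) + \sum_j X i j * (1 - g j).
  move=> i; rewrite /e.
  have -> : rowsum Z i = r i - \sum_j (X i j - Z i j).
    by rewrite /r /rowsum sumrB; ring.
  have h1 : \sum_j (X i j - Z i j) <= r i * (1 - f i) + \sum_j X i j * (1 - g j).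
    rewrite /r /rowsum mulr_suml -big_split /=; apply: ler_sum => j _; exact: XZ.
  have h2 : r i * (1 - f i) = r i - r i * f i by ring.
  lra.
have Db : D <= \sum_i `|r i - a i| + \sum_j `|c j - b j|.
  apply: (le_trans (ler_sum _ (fun i _ => eb i))).
  rewrite big_split /=; apply: lerD; first by apply: ler_sum => i _; exact: rf2.
  rewrite exchange_big /=; apply: ler_sum => j _.
  apply: le_trans (cg2 j); rewrite /c /colsum mulr_suml; exact: lexx.
exists Y; split.
  split; [|split].
  - move=> i j; rewrite YE addr_ge0 // divr_ge0 // mulr_ge0 //.
  - apply/funext => i.
    have -> : rowsum Y i = rowsum Z i + e i * (\sum_j h j) / D.
      rewrite /rowsum (eq_bigr _ (fun j _ => YE i j)) big_split /=.
      by rewrite mulr_sumr mulr_suml.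
    by rewrite Dh eD /e addrC subrK.
  - apply/funext => j.
    have -> : colsum Y j = colsum Z j + h j * (\sum_i e i) / D.
      rewrite /colsum (eq_bigr _ (fun i _ => YE i j)) big_split /=.
      by rewrite mulr_sumr mulr_suml; congr (_ + _); apply: eq_bigr => i _; rewrite (mulrC (e i)).
    by rewrite hD /h addrC subrK.
have c1 : frob C Y <= frob C X + \sum_i \sum_j L * (e i * h j / D).
  rewrite /frob -big_split /=; apply: ler_sum => i _.
  rewrite -big_split /=; apply: ler_sum => j _.
  rewrite YE mulrDr; apply: lerD; first by rewrite ler_wpM2l.
  by rewrite ler_wpM2r // divr_ge0 // mulr_ge0.
have c2 : \sum_i \sum_j L * (e i * h j / D) = L * D.
  rewrite /D mulr_sumr; apply: eq_bigr => i _.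
  by rewrite -mulr_sumr -mulr_suml -mulr_sumr Dh eD.
rewrite c2 in c1; apply: (le_trans c1); rewrite lerD2l ler_wpM2l //.
Qed.

End Aux.

Section Main.
Variable R : realType.

Lemma vmin_pos n (a : 'I_n -> R) : (1 <= n)%N -> (forall i, 0 < a i) ->
  in_simplex a -> 0 < vmin a /\ vmin a <= 1.
Proof.
move=> n1 apos sa.
pose i0 : 'I_n := Ordinal n1.
have lb0 : has_lbound (range a).
  by exists 0 => _ [i _ <-]; exact: ltW.
split.
  pose e := \big[Num.min/1]_i a i.
  have e0 : 0 < e.
    apply: (big_ind (fun x => 0 < x)) => //.
    by move=> x y x0 y0; rewrite lt_min x0.
  apply: (lt_le_trans e0); apply: lb_le_inf; first by exists (a i0), i0.
  by move=> _ [i _ <-]; exact: bigmin_le.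
apply: (le_trans _ (@simplex_le1 R n a sa i0)).
by apply: ge_inf => //; exists i0.
Qed.

End Main.

Theorem theorem4 (R : realType) (n : nat) (C : 'M[R]_n) (tau : R)
  (a b : 'I_n -> R) :
  (1 <= n)%N ->
  (forall i j, 0 <= C i j) ->
  0 < tau ->
  in_simplex a -> in_simplex b ->
  (forall i, 0 < a i) -> (forall i, 0 < b i) ->
  let kappa := 1 / Num.min (vmin a) (vmin b) in
  let M := ln 2 * mx_sup_norm C ^+ 2 * (n%:R + 3 * kappa) ^+ 2
           + 2 * n%:R * mx_sup_norm C ^+ 2 in
  0 <= OT C a b - UOT_KL C tau a b /\ OT C a b - UOT_KL C tau a b <= M / tau.
Proof.
move=> n1 C0 t0 sa sb apos bpos kappa M.
set L := mx_sup_norm C.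
have L0 : 0 <= L := @sup_norm_ge0 R n C.
have [va1 va2] := @vmin_pos R n a n1 apos sa.
have [vb1 vb2] := @vmin_pos R n b n1 bpos sb.
have k1 : 1 <= kappa.
  have m0 : 0 < Num.min (vmin a) (vmin b) by rewrite lt_min va1.
  rewrite /kappa ler_pdivlMr // mul1r ge_min va2 //.
have ln2 : 1 / 2 <= ln (2 : R).
  have := @ln_le_sub1 R (2^-1) (ltac:(by rewrite invr_gt0)).
  rewrite lnV ?posrE //; lra.
have nR : 1 <= n%:R :> R by rewrite ler1n.
have M4 : 4 * n%:R * L ^+ 2 <= M.
  rewrite /M.
  have h : 2 * n%:R <= ln 2 * (n%:R + 3 * kappa) ^+ 2 :> R.
    have h1 : 4 * n%:R <= (n%:R + 3 * kappa) ^+ 2 :> R by nra.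
    have h2 : 0 <= (n%:R + 3 * kappa) ^+ 2 :> R by exact: sqr_ge0.
    nra.
  have L2 : 0 <= L ^+ 2 by exact: sqr_ge0.
  have h3 := ler_wpM2r L2 h. rewrite -/L. lra.
have frob0 : forall X, mx_nonneg X -> 0 <= frob C X.
  move=> X X0; apply: sumr_ge0 => i _; apply: sumr_ge0 => j _.
  exact: mulr_ge0.
pose S1 := [set frob C X | X in transport_polytope a b].
pose S2 := [set frob C X + tau * KL (rowsum X) a + tau * KL (colsum X) b
      | X in [set Y : 'M[R]_n | mx_nonneg Y]].
have Vge0 : forall X, mx_nonneg X ->
    0 <= frob C X + tau * KL (rowsum X) a + tau * KL (colsum X) b.
  move=> X X0.
  have r0 : forall i, 0 <= rowsum X i by move=> i; apply: sumr_ge0 => j _.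
  have c0 : forall j, 0 <= colsum X j by move=> j; apply: sumr_ge0 => i _.
  have := @KL_ge0 R n _ _ r0 apos; have := @KL_ge0 R n _ _ c0 bpos.
  have := frob0 X X0; nra.
have lb1 : has_lbound S1.
  exists 0 => _ [X [X0 _] <-]; exact: frob0.
have lb2 : has_lbound S2.
  exists 0 => _ [X X0 <-]; exact: Vge0.
have nn0 : mx_nonneg (0 : 'M[R]_n) by move=> i j; rewrite mxE.
have OTle : forall X, mx_nonneg X -> OT C a b <=
    frob C X + L * (\sum_i `|rowsum X i - a i| + \sum_j `|colsum X j - b j|).
  move=> X X0; have [Y [HY HC]] := @round R n C X a b C0 X0 sa sb.
  apply: le_trans HC; apply: ge_inf => //; by exists Y.
have ne1 : S1 !=set0.
  have [Y [HY _]] := @round R n C 0 a b C0 nn0 sa sb.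
  by exists (frob C Y), Y.
have ne2 : S2 !=set0 by exists (frob C 0 + tau * KL (rowsum 0) a + tau * KL (colsum 0) b), 0.
split.
  rewrite subr_ge0; apply: lb_le_inf => // _ [Y [Y0 [Yr Yc]] <-].
  apply: le_trans (ge_inf lb2 (ex_intro2 _ _ Y Y0 erefl)) _.
  by rewrite Yr Yc !KL_self !mulr0 !addr0.
rewrite lerBlDr -lerBlDl.
apply: lb_le_inf => // _ [X X0 <-].
have VX := Vge0 X X0.
have r0 : forall i, 0 <= rowsum X i by move=> i; apply: sumr_ge0 => j _.
have c0 : forall j, 0 <= colsum X j by move=> j; apply: sumr_ge0 => i _.
have [tl|tg] := ltP tau (2 * L).
  have z1 : \sum_i `|rowsum 0 i - a i| = 1.
    case: sa => a0 a1; rewrite -a1; apply: eq_bigr => i _.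
    rewrite /rowsum big1 ?sub0r ?normrN ?ger0_norm // => j _; by rewrite mxE.
  have z2 : \sum_j `|colsum 0 j - b j| = 1.
    case: sb => b0 b1; rewrite -b1; apply: eq_bigr => i _.
    rewrite /colsum big1 ?sub0r ?normrN ?ger0_norm // => j _; by rewrite mxE.
  have f0 : frob C 0 = 0.
    by rewrite /frob big1 // => i _; rewrite big1 // => j _; rewrite mxE mulr0.
  have := OTle 0 nn0; rewrite z1 z2 f0 add0r => h.
  have : 2 * L <= M / tau.
    rewrite ler_pdivlMr //.
    have : L ^+ 2 <= n%:R * L ^+ 2 by rewrite ler_peMl // sqr_ge0.
    nra.
  lra.
have kk1 := @kl_bound R n (rowsum X) a L tau L0 t0 tg r0 apos (@simplex_le1 R n a sa).
have kk2 := @kl_bound R n (colsum X) b L tau L0 t0 tg c0 bpos (@simplex_le1 R n b sb).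
have := OTle X X0.
have : 4 * n%:R * L ^+ 2 / tau <= M / tau by rewrite ler_pM2r ?invr_gt0.
have -> : 4 * n%:R * L ^+ 2 / tau = n%:R * (2 * (L ^+ 2 / tau)) + n%:R * (2 * (L ^+ 2 / tau)).
  by rewrite !mulrA; ring.
lra.
Qed.
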